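(* Let $X$ be a $q$-generic $n\times m$ matrix ($m\le n$) whose entries lie in a division ring containing $K_q$ in its center. Let $i_1,\dots,i_m\in[n]$ (not necessarily in increasing order and not necessarily distinct), and let $A$ be the $m\times m$ matrix whose $t$-th row is $(x_{i_t1},\dots,x_{i_tm})$. For $0\le k<m$ let $A^{(k)}$ denote the matrix obtained from $A$ by deleting its first $k$ rows and first $k$ columns. Then, whenever the quasideterminants on the right are defined, $$\det_qA=\big|A^{(0)}\big|_{11}\,\big|A^{(1)}\big|_{11}\,\big|A^{(2)}\big|_{11}\cdots\big|A^{(m-1)}\big|_{11},$$ where $|A^{(m-1)}|_{11}=x_{i_m m}$ (i.e. $\det_qA=|A|_{i_11}|A^{i_11}|_{i_22}|A^{i_1i_2,12}|_{i_33}\cdots a_{i_mm}$).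
   Context: $K_q$ is a field of characteristic $0$ with $q\neq0$ not a root of unity. An $n\times m$ matrix $X=(x_{ij})$ is $q$-generic if for all $i<j$, $k<l$: $x_{kj}x_{ki}=qx_{ki}x_{kj}$; $x_{jk}x_{ik}=qx_{ik}x_{jk}$; $x_{jk}x_{il}=x_{il}x_{jk}$; $x_{jl}x_{ik}=x_{ik}x_{jl}+(q-q^{-1})x_{il}x_{jk}$. For a square matrix $A=(a_{ij})$ of size $m$, $\det_qA=\sum_{\sigma\in S_m}(-q)^{-\ell(\sigma)}a_{1\sigma1}\cdots a_{m\sigma m}$, where $\ell(\sigma)$ is the number of inversions of $\sigma$. For a square matrix $B$, $B^{ij}$ is $B$ with row $i$ and column $j$ deleted, and the $(i,j)$-quasideterminant is $|B|_{ij}=b_{ij}-\xi(B^{ij})^{-1}\zeta$, with $\xi$ row $i$ of $B$ without its $j$-th entry and $\zeta$ column $j$ of $B$ without its $i$-th entry (defined when $B^{ij}$ is invertible). *)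

(* Defs.v *)
From HB Require Import structures.
From mathcomp Require Import all_boot all_order all_algebra.
From mathcomp Require Import fingroup perm.
From Stdlib Require Import ClassicalEpsilon.
Set Implicit Arguments. Unset Strict Implicit. Unset Printing Implicit Defensive.
Import Order.TTheory GRing.Theory Num.Theory.
Local Open Scope ring_scope.

Section Defs.
Variable D : unitRingType.

Definition division_ring := forall x : D, x != 0 -> x \is a GRing.unit.

Definition is_inverse p (B C : 'M[D]_p) := B *m C = 1%:M /\ C *m B = 1%:M.
Definition invertible_nc p (B : 'M[D]_p) := exists C, is_inverse B C.
(* the (unique, when it exists) inverse; junk value 0 otherwise *)
Definition inv_nc p (B : 'M[D]_p) : 'M[D]_p := epsilon (inhabits 0) (is_inverse B).

Definition minor_ij p (B : 'M[D]_p.+1) (i j : 'I_p.+1) : 'M[D]_p := row' i (col' j B).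
Definition qdet_defined p (B : 'M[D]_p.+1) (i j : 'I_p.+1) := invertible_nc (minor_ij B i j).
Definition qdet p (B : 'M[D]_p.+1) (i j : 'I_p.+1) : D :=
  B i j - ((col' j (row i B)) *m inv_nc (minor_ij B i j) *m (row' i (col j B))) 0 0.

Definition q_generic (q : D) n m (X : 'M[D]_(n, m)) :=
  [/\ (forall (k : 'I_n) (i j : 'I_m), (i < j)%N -> X k j * X k i = q * X k i * X k j),
      (forall (k : 'I_m) (i j : 'I_n), (i < j)%N -> X j k * X i k = q * X i k * X j k),
      (forall (i j : 'I_n) (k l : 'I_m), (i < j)%N -> (k < l)%N -> X j k * X i l = X i l * X j k) &
      (forall (i j : 'I_n) (k l : 'I_m), (i < j)%N -> (k < l)%N ->
          X j l * X i k = X i k * X j l + (q - q^-1) * X i l * X j k)].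
End Defs.

Definition inversions m (s : 'S_m) : nat :=
  #|[set p : 'I_m * 'I_m | (p.1 < p.2)%N && (s p.2 < s p.1)%N]|.

Definition qdetq (K : fieldType) (D : unitRingType) (f : {rmorphism K -> D}) (q : K)
  m (A : 'M[D]_m) : D :=
  \sum_(s : 'S_m) f ((- q) ^- inversions s) * \prod_(i < m) A i (s i).

Definition csz m (k : nat) := (m - k.+1).+1.

Lemma shift_lt m (k : 'I_m) (a : 'I_(csz m k)) : (k + a < m)%N.
Proof.
have hk := ltn_ord k; have ha : (a < m - k)%N by rewrite -(subnSK hk) (ltn_ord a).
by rewrite -ltn_subRL.
Qed.

(* A^{(k)} : A with its first k rows and first k columns deleted (size m - k) *)
Definition cornerA (D : Type) m (A : 'M[D]_m) (k : 'I_m) : 'M[D]_(csz m k) :=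
  \matrix_(a < csz m k, b < csz m k) A (Ordinal (@shift_lt m k a)) (Ordinal (@shift_lt m k b)).

(* Main.v *)
Require Import Defs.
From HB Require Import structures.
From mathcomp Require Import all_boot all_order all_algebra.
From mathcomp Require Import fingroup perm.
Import Order.TTheory GRing.Theory Num.Theory.
Local Open Scope ring_scope.
Set Implicit Arguments. Unset Strict Implicit.

Lemma invE m (s : 'S_m) :
  inversions s = (\sum_(i < m) \sum_(j < m) ((i < j) && (s j < s i)))%N.
Proof.
rewrite /inversions cardsE -sum1_card pair_bigA /= big_mkcond /=.
by apply: eq_bigr => -[i j] _ /=; rewrite unfold_in /=; case: ifP.
Qed.

Lemma ltn_bump2 h i j : (bump h i < bump h j)%N = (i < j)%N.
Proof. by rewrite !ltnNge leq_bump2. Qed.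

Lemma inv_lift m (j : 'I_m.+1) (s : 'S_m) :
  inversions (lift_perm ord0 j s) = (j + inversions s)%N.
Proof.
rewrite !invE big_ord_recl.
congr (_ + _)%N; last first.
  apply: eq_bigr => i _; rewrite big_ord_recl /=.
  rewrite add0n; apply: eq_bigr => k _.
  by rewrite !lift_perm_lift /= !ltn_bump2.
rewrite big_ord_recl lift_perm_id ltnn /= add0n.
transitivity (\sum_(b < m) (s b < j)%N)%N; last first.
  rewrite (reindex_inj (@perm_inj _ s^-1)) /=.
  under eq_bigr do rewrite permKV.
  case: j => j hj /=.
  rewrite -(big_mkord xpredT (fun i => nat_of_bool (i < j)%N)) (@big_cat_nat _ _ _ j) //=.
  rewrite [X in (_ + X)%N]big_nat_cond [X in (_ + X)%N]big1 ?addn0; last first.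
    by move=> i /andP[/andP[h _] _]; rewrite ltnNge h.
  rewrite big_nat_cond (eq_bigr (fun _ => 1%N)); last by move=> i /andP[/andP[_ ->]].
  by rewrite -big_nat_cond sum_nat_const_nat subn0 muln1.
apply: eq_bigr => b _; rewrite lift_perm_lift /=.
rewrite /bump; case: (leqP j (s b)) => h /=.
  by rewrite add1n ltnNge (leq_trans h (leqnSn _)).
by change (nat_of_bool (s b < j)%N = 1%N); rewrite h.
Qed.

From mathcomp Require Import zify.
From Stdlib Require Import ClassicalEpsilon.

Lemma sum_eq1 m (k : 'I_m) : (\sum_(i < m) (i == k : nat))%N = 1%N.
Proof. by rewrite (bigD1 k) //= eqxx big1 // => i /negbTE ->. Qed.

Lemma inv_tperm m (s0 s1 : 'I_m) (hs : val s1 = (val s0).+1) (t : 'S_m) :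
  (t s0 < t s1)%N -> inversions (tperm s0 s1 * t) = (inversions t).+1.
Proof.
move=> hlt; rewrite !invE.
rewrite (reindex_inj (@perm_inj _ (tperm s0 s1))) /=.
under eq_bigr => i _ do rewrite (reindex_inj (@perm_inj _ (tperm s0 s1))) /=.
have ne01 : s0 != s1 by apply/eqP => h; move: hs; rewrite h /=; lia.
have key : forall i j : 'I_m,
   ((tperm s0 s1 i < tperm s0 s1 j)%N && ((tperm s0 s1 * t)%g (tperm s0 s1 j) < (tperm s0 s1 * t)%g (tperm s0 s1 i))%N : nat)
   = ((i < j)%N && (t j < t i)%N + ((i == s1) && (j == s0)))%N.
  have hs' : nat_of_ord s1 = (nat_of_ord s0).+1 := hs.
  have h01 : (s0 < s1)%N by lia.
  have h10 : (s1 < s0)%N = false by rewrite ltnNge ltnW.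
  have ht10 : (t s1 < t s0)%N = false by rewrite ltnNge ltnW.
  have e10 : (s1 == s0) = false by rewrite eq_sym (negbTE ne01).
  have sh : forall k : 'I_m, k <> s0 -> k <> s1 -> ((s1 < k)%N = (s0 < k)%N) /\ ((k < s1)%N = (k < s0)%N).
    move=> k hk0 hk1; have a0 : (k : nat) != s0 by apply/eqP => /val_inj.
    have a1 : (k : nat) != s1 by apply/eqP => /val_inj.
    split; apply/idP/idP; lia.
  move=> i j; rewrite !permM !tpermK.
  case: (tpermP s0 s1 i) => [->|->|hi0 hi1]; case: (tpermP s0 s1 j) => [->|->|hj0 hj1];
    rewrite ?eqxx ?ltnn ?h01 ?h10 ?hlt ?ht10 ?e10 ?(negbTE ne01) ?andbF ?andFb ?andbT ?addn0 //=.
  - by case: (sh j hj0 hj1) => ->.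
  - by case: (sh j hj0 hj1) => ->; rewrite (introF eqP hj0) addn0.
  - by case: (sh i hi0 hi1) => _ ->; rewrite (introF eqP hi1) addn0.
  - by case: (sh i hi0 hi1) => _ ->.
  - by rewrite (introF eqP hi1) addn0.
under eq_bigr => i _ do under eq_bigr => j _ do rewrite key.
under eq_bigr => i _ do rewrite big_split /=.
rewrite big_split /= -addn1; congr (_ + _)%N.
rewrite (bigD1 s1) //= [X in (_ + X)%N]big1 ?addn0.
  rewrite (eq_bigr (fun j => (j == s0 : nat))) ?sum_eq1 // => j _.
  by rewrite eqxx.
by move=> i /negbTE hi; apply: big1 => j _; rewrite hi.
Qed.

Section Alg.
Variables (K : fieldType) (D : unitRingType) (f : {rmorphism K -> D}) (q : K).
Hypothesis hq0 : q != 0.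
Hypothesis hcentral : forall (a : K) (x : D), f a * x = x * f a.

Definition w (k : nat) : D := f ((- q) ^- k).

Lemma wD a b : w (a + b) = w a * w b.
Proof. by rewrite /w exprD invfM rmorphM. Qed.

Lemma w0 : w 0 = 1.
Proof. by rewrite /w expr0 invr1 rmorph1. Qed.

Lemma laplace p (M : 'M[D]_p.+1) :
  qdetq f q M = \sum_(j < p.+1) w j * M ord0 j * qdetq f q (row' ord0 (col' j M)).
Proof.
rewrite /qdetq (partition_big (fun s : 'S_p.+1 => s ord0) predT) //=.
apply: eq_bigr => j _.
rewrite (reindex (lift_perm ord0 j)); last first.
  pose ulsf i (s : 'S_p.+1) k := odflt k (unlift (s i) (s (lift i k))).
  have ulsfK i (s : 'S_p.+1) k: lift (s i) (ulsf i s k) = s (lift i k).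
    rewrite /ulsf; have:= neq_lift i k.
    by rewrite -(can_eq (permK s)) => /unlift_some[] ? ? ->.
  have inj_ulsf: injective (ulsf ord0 _).
    move=> s; apply: can_inj (ulsf (s ord0) s^-1%g) _ => k'.
    by rewrite {1}/ulsf ulsfK !permK liftK.
  exists (fun s => perm (inj_ulsf s)) => [s _ | s].
    by apply/permP=> k'; rewrite permE /ulsf lift_perm_lift lift_perm_id liftK.
  move/(s _ =P _) => si0; apply/permP=> k.
  case: (unliftP ord0 k) => [k'|] ->; rewrite ?lift_perm_id //.
  by rewrite lift_perm_lift -si0 permE ulsfK.
rewrite big_distrr /=.
apply: eq_big => [s | s _]; first by rewrite lift_perm_id eqxx.
rewrite inv_lift -/(w _) wD big_ord_recl lift_perm_id.
rewrite -mulrA -[w j * _ * _]mulrA; congr (_ * _).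
rewrite /w mulrA hcentral -mulrA; congr (_ * _); congr (_ * _).
by apply: eq_bigr => i _; rewrite lift_perm_lift !mxE.
Qed.
End Alg.

Section Split.
Variables (D : ringType) (p : nat) (s0 s1 : 'I_p).
Hypothesis hs : val s1 = (val s0).+1.

Definition ext (G : 'I_p -> D) (i : nat) := G (insubd s0 i).
Definition Pre (G : 'I_p -> D) := \prod_(0 <= i < s0) ext G i.
Definition Suf (G : 'I_p -> D) := \prod_(s1.+1 <= i < p) ext G i.

Lemma prod_split (G : 'I_p -> D) :
  \prod_(i < p) G i = Pre G * (G s0 * G s1) * Suf G.
Proof.
have e : forall i : 'I_p, G i = ext G i.
  by move=> i; rewrite /ext; congr G; apply: val_inj; rewrite val_insubd ltn_ord.
rewrite (eq_bigr _ (fun i _ => e i)) -(big_mkord xpredT (ext G)).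
have h0 : (s0 <= p)%N by apply: ltnW.
rewrite (@big_cat_nat _ _ _ s0 0 p) //= (@big_ltn _ _ _ s0 p) // (@big_ltn _ _ _ s0.+1 p) -?hs ?ltn_ord //.
rewrite /Pre /Suf !mulrA -!e; congr (_ * _ * _ * _).
Qed.

Lemma PreSuf_eq (G H : 'I_p -> D) :
  (forall i, i != s0 -> i != s1 -> G i = H i) -> Pre G = Pre H /\ Suf G = Suf H.
Proof.
have hs' : nat_of_ord s1 = (nat_of_ord s0).+1 := hs.
have hp0 := ltn_ord s0; have hp1 := ltn_ord s1.
move=> e; split; apply: eq_big_nat => i /andP[h1 h2]; rewrite /ext; apply: e;
  apply/eqP => /(congr1 val); rewrite val_insubd.
all: have -> : (i < p)%N by lia.
all: rewrite /= => h; lia.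
Qed.
End Split.

From mathcomp Require Import ring.

Lemma sum_pair (V : zmodType) p (s0 s1 : 'I_p) (hs : val s1 = (val s0).+1) (F : 'S_p -> V) :
  \sum_(t : 'S_p) F t = \sum_(t : 'S_p | (t s0 < t s1)%N) (F t + F (tperm s0 s1 * t)%g).
Proof.
rewrite (bigID (fun t : 'S_p => (t s0 < t s1)%N)) /= big_split; congr (_ + _).
rewrite (reindex_inj (mulgI (tperm s0 s1))) /=; apply: eq_bigl => t.
rewrite !permM tpermL tpermR.
have ne01 : s0 != s1 by apply/eqP => h; move: hs; rewrite h /=; lia.
have : t s1 != t s0 by rewrite (inj_eq perm_inj) eq_sym.
by rewrite neq_ltn; case/orP => h; rewrite h // ltnNge ltnW.
Qed.

Section Alg2.
Variables (K : fieldType) (D : unitRingType) (f : {rmorphism K -> D}) (q : K).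
Hypothesis hq0 : q != 0.
Hypothesis hcentral : forall (a : K) (x : D), f a * x = x * f a.
Variables (n m : nat) (X : 'M[D]_(n, m)).
Hypothesis hX : q_generic (f q) X.

Lemma wC a x : w f q a * x = x * w f q a.
Proof. exact: hcentral. Qed.

Lemma wl a (P x S : D) : P * (w f q a * x) * S = w f q a * (P * x * S).
Proof. by rewrite !mulrA wC. Qed.

Lemma det_pair p (s0 s1 : 'I_p) (hs : val s1 = (val s0).+1) (M : 'M[D]_p) :
  qdetq f q M = \sum_(t : 'S_p | (t s0 < t s1)%N)
    (Pre s0 (fun i => M i (t i)) *
     (w f q (inversions t) * (M s0 (t s0) * M s1 (t s1) + w f q 1 * (M s0 (t s1) * M s1 (t s0))))
     * Suf s0 s1 (fun i => M i (t i))).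
Proof.
have ne01 : s0 != s1 by apply/eqP => h; move: hs; rewrite h /=; lia.
rewrite /qdetq (sum_pair hs); apply: eq_bigr => t ht.
rewrite inv_tperm // -!/(w f q _) -addn1 wD !(prod_split hs).
have [-> ->] : Pre s0 (fun i => M i ((tperm s0 s1 * t)%g i)) = Pre s0 (fun i => M i (t i)) /\
   Suf s0 s1 (fun i => M i ((tperm s0 s1 * t)%g i)) = Suf s0 s1 (fun i => M i (t i)).
  by apply: PreSuf_eq => // i h0 h1; rewrite permM tpermD // eq_sym.
rewrite !permM tpermL tpermR [in RHS]wl mulrDr mulrDl mulrDr; congr (_ + _).
by rewrite wl mulrA -mulrA.
Qed.

Definition incr p (c : 'I_p -> 'I_m) := forall a b : 'I_p, (a < b)%N -> (c a < c b)%N.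

Lemma det_adj0 p (M : 'M[D]_p) (r : 'I_p -> 'I_n) (c : 'I_p -> 'I_m) (hc : incr c)
  (hM : forall i j, M i j = X (r i) (c j)) (s0 s1 : 'I_p) (hs : val s1 = (val s0).+1) :
  r s0 = r s1 -> qdetq f q M = 0.
Proof.
move=> hr; rewrite (det_pair hs) big1 // => t ht.
case: hX => h1 _ _ _.
rewrite !hM hr (h1 _ _ _ (hc _ _ ht)) -[f q * _ * _]mulrA [w f q 1 * _]mulrA /w -rmorphM.
have -> : (- q) ^- 1 * q = -1 by rewrite expr1 invrN mulNr mulVf.
by rewrite rmorphN1 mulN1r addrN mulr0 mulr0 mul0r.
Qed.

Lemma det_swap p (M M' : 'M[D]_p) (r : 'I_p -> 'I_n) (c : 'I_p -> 'I_m) (hc : incr c)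
  (s0 s1 : 'I_p) (hs : val s1 = (val s0).+1)
  (hM : forall i j, M i j = X (r i) (c j))
  (hM' : forall i j, M' i j = X (r (tperm s0 s1 i)) (c j)) :
  (r s0 < r s1)%N -> qdetq f q M' = w f q 1 * qdetq f q M.
Proof.
have ne01 : s0 != s1 by apply/eqP => h; move: hs; rewrite h /=; lia.
move=> hr; rewrite !(det_pair hs) big_distrr; apply: eq_bigr => t ht.
have [-> ->] : Pre s0 (fun i => M' i (t i)) = Pre s0 (fun i => M i (t i)) /\
   Suf s0 s1 (fun i => M' i (t i)) = Suf s0 s1 (fun i => M i (t i)).
  by apply: PreSuf_eq => // i h0 h1; rewrite hM hM' tpermD // eq_sym.
rewrite /= -[in RHS]wl; congr (_ * _ * _).
rewrite [RHS]mulrA (wC 1 (w f q _)) -mulrA; congr (_ * _).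
case: hX => _ _ h3 h4.
rewrite !hM !hM' tpermL tpermR (h3 _ _ _ _ hr (hc _ _ ht)) (h4 _ _ _ _ hr (hc _ _ ht)).
rewrite -rmorphV ?unitfE // -rmorphB /w.
set e := (- q) ^- 1; set d := q - q^-1.
set x := X (r s0) (c (t s0)) * X (r s1) (c (t s1)).
set y := X (r s0) (c (t s1)) * X (r s1) (c (t s0)).
rewrite -[f d * _ * _]mulrA -/y mulrDr [RHS]mulrDr addrCA; congr (_ + _).
clearbody x y. rewrite !mulrA -!rmorphM -{1}(mul1r y) -(rmorph1 f) -mulrDl -rmorphD; congr (f _ * _).
rewrite /e /d expr1; field; by rewrite oppr_eq0 hq0.
Qed.

Lemma w1_inj (y : D) : w f q 1 * y = 0 -> y = 0.
Proof.
move=> h; rewrite -(mul1r y) -(rmorph1 f).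
have -> : (1 : K) = - q * (- q) ^- 1 by rewrite expr1 mulfV // oppr_eq0.
by rewrite rmorphM -mulrA -/(w f q 1) h mulr0.
Qed.

Lemma det_rep0 k : forall p (M : 'M[D]_p) (r : 'I_p -> 'I_n) (c : 'I_p -> 'I_m),
  incr c -> (forall i j, M i j = X (r i) (c j)) ->
  forall i j : 'I_p, (i < j)%N -> (j - i)%N = k.+1 -> r i = r j -> qdetq f q M = 0.
Proof.
elim: k => [|k IH] p M r c hc hM i j hij hk hr.
  by apply: (det_adj0 hc hM (s0 := i) (s1 := j)) => //=; lia.
have hj1 : (j.-1 < p)%N by have := ltn_ord j; lia.
pose s0 := Ordinal hj1.
have hs : val j = (val s0).+1 by rewrite /=; lia.
have ne0 : s0 != j by apply/eqP => /(congr1 val) /=; lia.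
have nei0 : i != s0 by apply/eqP => /(congr1 val) /=; lia.
have neij : i != j by apply/eqP => /(congr1 val) /=; lia.
pose r' := fun a => r (tperm s0 j a).
pose M' : 'M[D]_p := \matrix_(a, b) X (r' a) (c b).
have hM' : forall a b, M' a b = X (r' a) (c b) by move=> a b; rewrite mxE.
have h0 : qdetq f q M' = 0.
  apply: (IH p M' r' c hc hM' i s0) => /=; try lia.
  by rewrite /r' tpermL tpermD // eq_sym.
case: (ltngtP (r s0) (r j)) => hrj.
- apply: w1_inj; rewrite -h0; symmetry.
  by apply: (det_swap hc hs hM) => // a b; rewrite hM'.
- rewrite (det_swap (M := M') (M' := M) (r := r') hc hs hM').
    by rewrite h0 mulr0.
  by move=> a b; rewrite hM /r' tpermK.
  by rewrite /r' tpermL tpermR.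
- by apply: (det_adj0 hc hM hs); apply: val_inj.
Qed.

Lemma step p (M : 'M[D]_p.+1) (r : 'I_p.+1 -> 'I_n) (c : 'I_p.+1 -> 'I_m) (hc : incr c)
  (hM : forall i j, M i j = X (r i) (c j)) :
  invertible_nc (minor_ij M ord0 ord0) ->
  qdetq f q M = qdet M ord0 ord0 * qdetq f q (minor_ij M ord0 ord0).
Proof.
move=> hinv.
set B := minor_ij M ord0 ord0.
have [hB1 hB2] : is_inverse B (inv_nc B) by rewrite /inv_nc; apply: epsilon_spec.
set Bi := inv_nc B.
set v : 'cV[D]_p := \col_j (w f q j.+1 * qdetq f q (row' ord0 (col' (lift ord0 j) M))).
set xi := col' ord0 (row ord0 M).
set zeta := row' ord0 (col ord0 M).
have L : qdetq f q M = M ord0 ord0 * qdetq f q B + (xi *m v) ord0 ord0.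
  rewrite laplace // big_ord_recl w0 mul1r; congr (_ + _).
  rewrite mxE; apply: eq_bigr => j _; rewrite !mxE wC mulrA.
  by [].
have Z : forall t, (B *m v) t ord0 = - (zeta t ord0 * qdetq f q B).
  move=> t.
  pose N : 'M[D]_p.+1 := \matrix_(a, b) M (if a == ord0 then lift ord0 t else a) b.
  have hN0 : qdetq f q N = 0.
    apply: (@det_rep0 t p.+1 N (fun a => r (if a == ord0 then lift ord0 t else a)) c hc
              _ ord0 (lift ord0 t)).
    - by move=> a b; rewrite mxE hM.
    - by [].
    - by rewrite /= subn0.
    - case: eqP => [_|h]; last by case: h. case: eqP => //.
  move: hN0; rewrite laplace // big_ord_recl w0 mul1r.
  have eN : forall j, row' ord0 (col' j N) = row' ord0 (col' j M).
    by move=> j; apply/matrixP => a b; rewrite !mxE eq_sym (negbTE (neq_lift _ _)).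
  rewrite !eN mxE eqxx -/B => /eqP; rewrite addrC addr_eq0 => /eqP hS.
  have -> : zeta t ord0 = M (lift ord0 t) ord0 by rewrite !mxE.
  rewrite -hS mxE; apply: eq_bigr => j _; rewrite !mxE eqxx wC mulrA.
  by rewrite eN -[RHS]mulrA wC.
have ev : v = Bi *m (B *m v) by rewrite mulmxA hB2 mul1mx.
rewrite L ev [xi *m _]mulmxA mxE /qdet -/B -/Bi -/xi -/zeta mulrBl; congr (_ + _).
rewrite [(xi *m Bi *m zeta) _ _]mxE big_distrl /= -sumrN; apply: eq_bigr => t _.
by rewrite Z mulrN mulrA.
Qed.
End Alg2.

Lemma det0 (K : fieldType) (D : unitRingType) (f : {rmorphism K -> D}) (q : K) (M : 'M[D]_0) :
  qdetq f q M = 1.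
Proof.
rewrite /qdetq (bigD1 (1%g : 'S_0)) //= [X in _ + X]big1 ?addr0; last first.
  move=> s; have -> : s = 1%g by apply/permP => -[].
  by rewrite eqxx.
by rewrite big_ord0 mulr1 invE big_ord0 expr0 invr1 rmorph1.
Qed.

Lemma det_cast (K : fieldType) (D : unitRingType) (f : {rmorphism K -> D}) (q : K)
  p1 p2 (e : p1 = p2) (M1 : 'M[D]_p1) (M2 : 'M[D]_p2) :
  (forall i j, M1 i j = M2 (cast_ord e i) (cast_ord e j)) -> qdetq f q M1 = qdetq f q M2.
Proof.
subst p2 => h; congr qdetq; apply/matrixP => i j; by rewrite h !cast_ord_id.
Qed.

Theorem mainTheorem6 (K : fieldType) (D : unitRingType) (f : {rmorphism K -> D}) (q : K)
  (hchar : [pchar K] =i pred0) (hq0 : q != 0) (hqroot : forall k : nat, (0 < k)%N -> q ^+ k != 1)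
  (hcentral : forall (a : K) (x : D), f a * x = x * f a) (hdiv : division_ring D)
  (n m : nat) (hmn : (m <= n)%N) (X : 'M[D]_(n, m)) (hX : q_generic (f q) X)
  (I : 'I_m -> 'I_n) :
  let A : 'M[D]_m := \matrix_(t, s) X (I t) s in
  (forall k : 'I_m, qdet_defined (cornerA A k) ord0 ord0) ->
  qdetq f q A = \prod_(k < m) qdet (cornerA A k) ord0 ord0.
Proof.
move=> A hdef.
have hA : forall i j, A i j = X (I i) j by move=> i j; rewrite /A mxE.
clearbody A.
case: m X hX I A hdef hmn hA => [|m'] X hX I A hdef hmn hA.
  by rewrite det0 big_ord0.
set m := m'.+1 in X hX I A hdef hmn hA *.
pose G k := qdetq f q (\matrix_(a < m - k, b < m - k) A (inord (k + a)) (inord (k + b))).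
pose g l := qdet (cornerA A (inord l)) ord0 ord0.
have key : forall d k, (k + d = m)%N -> G k = \prod_(k <= l < m) g l.
  elim => [|d IH] k hk.
    rewrite addn0 in hk; subst k; rewrite big_geq // /G (@det_cast _ _ f q _ _ (subnn m) _ 0) ?det0 // => i.
    by have := ltn_ord i; rewrite {2}subnn.
  have hkm : (k < m)%N by lia.
  rewrite big_ltn // -(IH k.+1); last by lia.
  have hik : nat_of_ord (inord k : 'I_m) = k by rewrite inordK.
  have e1 : (m - k)%N = csz m (inord k : 'I_m) by rewrite /csz hik; lia.
  rewrite /G (@det_cast _ _ f q _ _ e1 _ (cornerA A (inord k))); last first.
    move=> i j; rewrite !mxE; have hi := ltn_ord i; have hj := ltn_ord j.
    by congr (A _ _); apply: val_inj; rewrite /= inordK ?hik //; lia.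
  rewrite (@step K D f q hq0 hcentral n m X hX _ _ (fun a => I (Ordinal (shift_lt a))) (fun b => Ordinal (shift_lt b))).
  - congr (_ * _).
    have e2 : (m - (inord k : 'I_m).+1)%N = (m - k.+1)%N by rewrite hik.
    apply: (@det_cast _ _ f q _ _ e2) => i j; rewrite !mxE.
    have hi := ltn_ord i; have hj := ltn_ord j.
    by congr (A _ _); apply: val_inj; rewrite /= /bump leq0n add1n [RHS]inordK; lia.
  - by move=> a b /= hab; rewrite ltn_add2l.
  - by move=> a b; rewrite !mxE hA.
  - exact: hdef.
rewrite (@det_cast _ _ f q _ _ (esym (subn0 m)) A (\matrix_(a, b) A (inord (0 + a)) (inord (0 + b)))).
  rewrite -/(G 0%N) (key m 0%N) ?add0n // big_mkord.
  by apply: eq_bigr => k _; rewrite /g inord_val.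
move=> i j; rewrite mxE; congr (A _ _); apply: val_inj; rewrite /= add0n inordK //.
Qed.
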